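(* Let $(h,n)=(4,2)$, let $K=\{id,(12)(34),(13)(24),(14)(23)\}\leq S_4$ be the Klein group and $U=K\times\{id\}\leq S_4\times S_2$. Then $U$ is regular, but $U$ is neither a symmetry group nor an anonymity group with respect to $(4,2)$.
   Context: Permutations compose as $(\sigma\tau)(x)=\sigma(\tau(x))$. Let $G=S_h\times S_n$ and $\mathcal{P}=(S_n)^h$ (preference profiles), with $G$ acting by $(p^{(\varphi,\psi)})_i=\psi\,p_{\varphi^{-1}(i)}$. A subgroup $U\leq G$ is regular if for every $p\in\mathcal{P}$, $\mathrm{Stab}_U(p)=\{g\in U:p^g=p\}\subseteq S_h\times\{id\}$. A social preference function (SPF) is any $F:\mathcal{P}\to S_n$; its symmetry group is $G(F)=\{(\varphi,\psi)\in G: F(p^{(\varphi,\psi)})=\psi F(p)\ \forall p\}$ and its anonymity group is $G_1(F)=G(F)\cap(S_h\times\{id\})$. $U$ is a symmetry group (resp. anonymity group) with respect to $(h,n)$ if $U=G(F)$ (resp. $U=G_1(F)$) for some SPF $F$. *)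

(* Defs.v *)
From mathcomp Require Import all_boot all_fingroup.
Set Implicit Arguments. Unset Strict Implicit. Unset Printing Implicit Defensive.
Local Open Scope group_scope.

Definition Gelt (h n : nat) : finType := ({perm 'I_h} * {perm 'I_n})%type.

Definition profile (h n : nat) : finType := {ffun 'I_h -> {perm 'I_n}}.

(* Paper composition: (sigma tau)(x) = sigma(tau(x)).
   MathComp: (s * t) x = t (s x).  Hence the paper's psi o q is the
   MathComp product q * psi. *)
Definition pcomp (n : nat) (sigma tau : {perm 'I_n}) : {perm 'I_n} := tau * sigma.

Definition act (h n : nat) (g : Gelt h n) (p : profile h n) : profile h n :=
  [ffun i => pcomp g.2 (p (g.1^-1 i))].

Definition regular (h n : nat) (U : {set Gelt h n}) : Prop :=
  forall p : profile h n, forall g, g \in U -> act g p = p -> g.2 = 1.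

Definition SPF (h n : nat) := profile h n -> {perm 'I_n}.

Definition symgroup (h n : nat) (F : SPF h n) : {set Gelt h n} :=
  [set g : Gelt h n | [forall p : profile h n, F (act g p) == pcomp g.2 (F p)]].

Definition anongroup (h n : nat) (F : SPF h n) : {set Gelt h n} :=
  symgroup F :&: [set g : Gelt h n | g.2 == 1].

Definition is_symmetry_group (h n : nat) (U : {set Gelt h n}) : Prop :=
  exists F : SPF h n, U = symgroup F.

Definition is_anonymity_group (h n : nat) (U : {set Gelt h n}) : Prop :=
  exists F : SPF h n, U = anongroup F.

(* Klein four group in S_4, with points 1,2,3,4 encoded as 0,1,2,3. *)
Definition i4 (k : nat) : 'I_4 := inord k.
Definition klein4 : {set {perm 'I_4}} :=
  [set 1; tperm (i4 0) (i4 1) * tperm (i4 2) (i4 3);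
          tperm (i4 0) (i4 2) * tperm (i4 1) (i4 3);
          tperm (i4 0) (i4 3) * tperm (i4 1) (i4 2)].

Definition U_klein : {set Gelt 4 2} := setX klein4 [set 1 : {perm 'I_2}].

(* Main.v *)
Require Import Defs.
From mathcomp Require Import all_boot all_fingroup.
Local Open Scope group_scope.
Lemma two_el (c : {perm 'I_2}) {a b : {perm 'I_2}} : a <> b -> c = a \/ c = b.
Proof.
move=> ab; case: (eqVneq c a) => [->|ca]; [by left|].
case: (eqVneq c b) => [->|cb]; [by right|].
have u : uniq [:: a; b; c].
  rewrite /= !inE negb_or andbT.
  rewrite (eq_sym a c) (eq_sym b c) ca cb !andbT; exact/eqP.
have := uniq_leq_size u (s2 := enum {perm 'I_2}) (fun x _ => mem_enum _ x).
by rewrite -cardE card_Sn.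
Qed.
Lemma all4 (i : 'I_4) : [\/ i = i4 0, i = i4 1, i = i4 2 | i = i4 3].
Proof.
case: i => [[|[|[|[|m]]]] Hi] //.
- by apply: Or41; apply/val_inj; rewrite /= inordK.
- by apply: Or42; apply/val_inj; rewrite /= inordK.
- by apply: Or43; apply/val_inj; rewrite /= inordK.
- by apply: Or44; apply/val_inj; rewrite /= inordK.
Qed.
Lemma actE (f : {perm 'I_4}) (p : profile 4 2) i : Defs.act (f, 1) p i = p (f^-1 i).
by rewrite /Defs.act ffunE /Defs.pcomp /= mulg1.

Qed.
Lemma cls (F : SPF 4 2) (k : {perm 'I_4}) x y u v
 (Hall : forall i, [\/ i = x, i = y, i = u | i = v])
 (kx : k^-1 x = y) (ky : k^-1 y = x) (ku : k^-1 u = v) (kv: k^-1 v = u)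
 (Hk : forall p, F (Defs.act (k,1) p) = F p) (q r : profile 4 2) :
 q x = q u -> q y = q v -> q x <> q y -> r x = r u -> r y = r v -> r x <> r y -> F q = F r.
Proof.
move=> qu qv qxy ru rv rxy.
have [e|ne] := eqVneq (q x) (r x).
- have ey : q y = r y.
    case: (two_el (r y) qxy) => // h; by case: rxy; rewrite -e h.
  congr F; apply/ffunP => i; case: (Hall i) => ->; congruence.
- have e1 : r x = q y by case: (two_el (r x) qxy) => // h; rewrite h eqxx in ne.
  have e2 : r y = q x by case: (two_el (r y) qxy) => // h; case: rxy; rewrite h.
  rewrite -(Hk q); congr F; apply/ffunP => i; rewrite actE.
  case: (Hall i) => ->; rewrite ?kx ?ky ?ku ?kv; congruence.
Qed.

Lemma Lgen (F : SPF 4 2) (t k : {perm 'I_4}) x y u v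
 (Hall : forall i, [\/ i = x, i = y, i = u | i = v])
 (tx : t^-1 x = y) (ty : t^-1 y = x) (tu : t^-1 u = u) (tv: t^-1 v = v)
 (kx : k^-1 x = y) (ky : k^-1 y = x) (ku : k^-1 u = v) (kv: k^-1 v = u)
 (Hk : forall p, F (Defs.act (k,1) p) = F p)
 (HE : forall q r : profile 4 2, q x <> q y -> q u <> q v -> r x <> r y -> r u <> r v -> F q = F r) :
 forall p, F (Defs.act (t,1) p) = F p.
Proof.
move=> p.
have [exy|nxy] := eqVneq (p x) (p y).
  congr F; apply/ffunP => i; rewrite actE.
  case: (Hall i) => ->; rewrite ?tx ?ty ?tu ?tv; congruence.
have [euv|nuv] := eqVneq (p u) (p v).
  rewrite -(Hk p); congr F; apply/ffunP => i; rewrite !actE.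
  case: (Hall i) => ->; rewrite ?tx ?ty ?tu ?tv ?kx ?ky ?ku ?kv; congruence.
apply: HE; rewrite ?actE ?tx ?ty ?tu ?tv; apply/eqP => //; by rewrite eq_sym.
Qed.

Lemma i4E k : k < 4 -> nat_of_ord (i4 k) = k. Proof. exact: inordK. Qed.
Lemma i4eq a b : a < 4 -> b < 4 -> (i4 a == i4 b) = (a == b).
Proof. by move=> ha hb; rewrite -val_eqE /= !i4E. Qed.
Lemma tpi4 a b c : a < 4 -> b < 4 -> c < 4 ->
  tperm (i4 a) (i4 b) (i4 c) = i4 (if c == a then b else if c == b then a else c).
Proof.
move=> ha hb hc; case: (eqVneq c a) => [->|ca]; first by rewrite tpermL.
case: (eqVneq c b) => [->|cb]; first by rewrite tpermR.
by rewrite tpermD // i4eq // eq_sym.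
Qed.
Lemma kinv a b c d i : (tperm a b * tperm c d)^-1 i = tperm a b (tperm c d i) :> 'I_4.
Proof. by rewrite invMg permM !tpermV. Qed.

Definition kA : {perm 'I_4} := tperm (i4 0) (i4 2) * tperm (i4 1) (i4 3).
Definition kB : {perm 'I_4} := tperm (i4 0) (i4 1) * tperm (i4 2) (i4 3).
Definition kC : {perm 'I_4} := tperm (i4 0) (i4 3) * tperm (i4 1) (i4 2).
Definition tau : {perm 'I_2} := tperm ord0 ord_max.
Lemma tau1 : (1 : {perm 'I_2}) <> tau.
Proof. move/permP/(_ ord0); rewrite perm1 /tau tpermL; by move/(f_equal val). Qed.

Definition rA : profile 4 2 := [ffun i : 'I_4 => if (nat_of_ord i < 2)%N then 1 else tau].
Definition rB : profile 4 2 := [ffun i : 'I_4 => if odd (nat_of_ord i) then tau else 1].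
Definition rC : profile 4 2 := [ffun i : 'I_4 => if (nat_of_ord i == 1%N) || (nat_of_ord i == 2%N) then tau else 1].

Ltac hall := let i := fresh "i" in move=> i; case: (all4 i) => ->;
  by [constructor 1|constructor 2|constructor 3|constructor 4].
Ltac kev := rewrite /kA /kB /kC ?kinv ?tpermV !tpi4.

Lemma neq_perm (f g : {perm 'I_4}) : [|| f (i4 0) != g (i4 0), f (i4 1) != g (i4 1) | f (i4 2) != g (i4 2)] -> f != g.
Proof. apply: contraL => /eqP ->; by rewrite !eqxx. Qed.

Ltac notin := rewrite !inE !negb_or; repeat (apply/andP; split);
  apply: neq_perm; rewrite ?permM ?perm1 !tpi4 // !i4eq //.

Lemma main_ext (F : SPF 4 2)
  (HK : forall k, k \in klein4 -> forall p, F (Defs.act (k,1) p) = F p) :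
  exists t, t \notin klein4 /\ forall p, F (Defs.act (t,1) p) = F p.
Proof.
have HA := HK kA ltac:(by rewrite !inE eqxx !orbT).
have HB := HK kB ltac:(by rewrite !inE eqxx !orbT).
have HC := HK kC ltac:(by rewrite !inE eqxx !orbT).
have clsA := @cls F kA (i4 0) (i4 2) (i4 1) (i4 3) ltac:(hall) ltac:(by kev) ltac:(by kev) ltac:(by kev) ltac:(by kev) HA.
have clsB := @cls F kB (i4 0) (i4 1) (i4 2) (i4 3) ltac:(hall) ltac:(by kev) ltac:(by kev) ltac:(by kev) ltac:(by kev) HB.
have clsC := @cls F kB (i4 0) (i4 1) (i4 3) (i4 2) ltac:(hall) ltac:(by kev) ltac:(by kev) ltac:(by kev) ltac:(by kev) HB.
have cA (q : profile 4 2) : q (i4 0) = q (i4 1) -> q (i4 2) = q (i4 3) -> q (i4 0) <> q (i4 2) -> F q = F rA.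
  by move=> *; apply: clsA => //; rewrite !ffunE !i4E //=; exact tau1.
have cB (q : profile 4 2) : q (i4 0) = q (i4 2) -> q (i4 1) = q (i4 3) -> q (i4 0) <> q (i4 1) -> F q = F rB.
  by move=> *; apply: clsB => //; rewrite !ffunE !i4E //=; exact tau1.
have cC (q : profile 4 2) : q (i4 0) = q (i4 3) -> q (i4 1) = q (i4 2) -> q (i4 0) <> q (i4 1) -> F q = F rC.
  by move=> *; apply: clsC => //; rewrite !ffunE !i4E //=; exact tau1.
have [eAB|nAB] := eqVneq (F rA) (F rB).
  exists (tperm (i4 0) (i4 3)); split; first by notin.
  apply: (@Lgen F _ kC (i4 0) (i4 3) (i4 1) (i4 2)) => //; try hall; try by kev.
  suff H : forall q : profile 4 2, q (i4 0) <> q (i4 3) -> q (i4 1) <> q (i4 2) -> F q = F rA.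
    by move=> q r *; rewrite !H.
  move=> q h1 h2; case: (two_el (q (i4 1)) h1) => e1; case: (two_el (q (i4 2)) h1) => e2;
  first [ by exfalso; congruence | by rewrite (cA q); congruence
        | by rewrite (cB q); congruence | by rewrite (cC q); congruence ].
have nAB' : F rA <> F rB by apply/eqP.
case: (two_el (F rC) nAB') => eC.
  exists (tperm (i4 0) (i4 2)); split; first by notin.
  apply: (@Lgen F _ kA (i4 0) (i4 2) (i4 1) (i4 3)) => //; try hall; try by kev.
  suff H : forall q : profile 4 2, q (i4 0) <> q (i4 2) -> q (i4 1) <> q (i4 3) -> F q = F rA.
    by move=> q r *; rewrite !H.
  move=> q h1 h2; case: (two_el (q (i4 1)) h1) => e1; case: (two_el (q (i4 3)) h1) => e2;
  first [ by exfalso; congruence | by rewrite (cA q); congruence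
        | by rewrite (cB q); congruence | by rewrite (cC q); congruence ].
exists (tperm (i4 0) (i4 1)); split; first by notin.
apply: (@Lgen F _ kB (i4 0) (i4 1) (i4 2) (i4 3)) => //; try hall; try by kev.
suff H : forall q : profile 4 2, q (i4 0) <> q (i4 1) -> q (i4 2) <> q (i4 3) -> F q = F rB.
  by move=> q r *; rewrite !H.
move=> q h1 h2; case: (two_el (q (i4 2)) h1) => e1; case: (two_el (q (i4 3)) h1) => e2;
first [ by exfalso; congruence | by rewrite (cA q); congruence
      | by rewrite (cB q); congruence | by rewrite (cC q); congruence ].
Qed.

Lemma inv_of (F : SPF 4 2) (S : {set Gelt 4 2}) (HS : S \subset symgroup F)
  (HU : U_klein \subset S) :
  forall k, k \in klein4 -> forall p, F (Defs.act (k,1) p) = F p.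
Proof.
move=> k kK p.
have : (k, 1) \in symgroup F.
  apply: (subsetP HS); apply: (subsetP HU); by rewrite in_setX /= kK set11.
rewrite inE => /forallP/(_ p)/eqP ->; by rewrite /Defs.pcomp /= mulg1.
Qed.

Lemma in_sym (F : SPF 4 2) t : (forall p, F (Defs.act (t,1) p) = F p) -> (t, 1) \in symgroup F.
Proof.
move=> H; rewrite inE; apply/forallP => p; apply/eqP; by rewrite H /Defs.pcomp /= mulg1.
Qed.

Theorem mainTheorem8 :
  regular U_klein /\ ~ is_symmetry_group U_klein /\ ~ is_anonymity_group U_klein.
Proof.
split; last split.
- move=> p [f s]; rewrite !inE /= => /andP[_ /eqP -> _] //.
- move=> [F eU].
  have HK := @inv_of F (symgroup F) (subxx _) ltac:(by rewrite eU).
  have [t [tK Ht]] := main_ext F HK.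
  have := in_sym F t Ht; by rewrite -eU in_setX /= (negbTE tK).
- move=> [F eU].
  have HK := @inv_of F (anongroup F) ltac:(exact: subsetIl) ltac:(by rewrite eU).
  have [t [tK Ht]] := main_ext F HK.
  have : (t, 1) \in anongroup F by rewrite inE (in_sym F t Ht) inE /=.
  by rewrite -eU in_setX /= (negbTE tK).
Qed.
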